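(* Let $(\tilde\Theta^n_I)$ be a congruent family of covariant $n$-tensor fields on $\mathcal M_+(I)$, $I$ ranging over finite sets, such that $(\tilde\Theta^n_I)_{\lambda c_I}=0$ for all finite sets $I$ and all $\lambda>0$. Then $\tilde\Theta^n_I=0$ for all finite sets $I$.
   Context: For a finite set $I$: $\mathcal S(I)=\{\sum_{i\in I}x_i\delta_i:x_i\in\mathbb R\}$, $\mathcal M_+(I)=\{\sum\mu_i\delta_i:\mu_i>0\}$ (tangent space $\mathcal S(I)$), $c_I:=\frac1{|I|}\sum_i\delta_i$. A covariant $n$-tensor field on $\mathcal M_+(I)$ is a continuously varying family of $n$-multilinear forms on $\mathcal S(I)$. A Markov kernel $K:I\to\mathcal P(I')$ between finite sets is a stochastic matrix $K(i)=\sum_{i'}K^i_{i'}\delta_{i'}$ with $K_*(\sum x_i\delta_i)=\sum_{i,i'}K^i_{i'}x_i\delta_{i'}$; it is congruent if there is a map $\kappa:I'\to I$ with $K^i_{i'}=0$ whenever $\kappa(i')\ne i$. The family is congruent if $(\tilde\Theta^n_{I'})_{K_*\mu}(K_*V_1,\dots,K_*V_n)=(\tilde\Theta^n_I)_\mu(V_1,\dots,V_n)$ for every congruent Markov kernel $K:I\to\mathcal P(I')$ between finite sets with $K_*(\mathcal M_+(I))\subset\mathcal M_+(I')$. *)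

(* Defs.v *)
From HB Require Import structures.
From mathcomp Require Import all_boot all_order all_algebra.
From mathcomp Require Import reals.
Set Implicit Arguments. Unset Strict Implicit. Unset Printing Implicit Defensive.
Import Order.TTheory GRing.Theory Num.Theory.
Local Open Scope ring_scope.

(* Elements of S(I) (signed finite measures on I) are represented by their
   coefficient functions x : I -> R, i.e. sum_i x_i delta_i. *)

Definition Mpos (R : realType) (I : finType) (mu : I -> R) : Prop :=
  forall i, 0 < mu i.

Definition cI (R : realType) (I : finType) : I -> R :=
  fun _ => (#|I|%:R)^-1.

(* A (candidate) covariant n-tensor field on M_+(I):
   Theta mu (V_0,...,V_{n-1}).  Only its values at mu in M_+(I) matter. *)
Definition tfield (R : realType) (n : nat) (I : finType) : Type :=
  (I -> R) -> ('I_n -> I -> R) -> R.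

Definition upd (R : realType) (n : nat) (I : finType)
  (V : 'I_n -> I -> R) (k : 'I_n) (x : I -> R) : 'I_n -> I -> R :=
  fun j => if j == k then x else V j.

Definition multilinear_at (R : realType) (n : nat) (I : finType)
  (T : tfield R n I) (mu : I -> R) : Prop :=
  forall (V : 'I_n -> I -> R) (k : 'I_n) (a : R) (x y : I -> R),
    T mu (upd V k (fun i => a * x i + y i)) =
    a * T mu (upd V k x) + T mu (upd V k y).

(* continuity in mu on M_+(I) (w.r.t. the max-norm on S(I)); for finite
   dimensional S(I) this is continuity of the family of multilinear forms *)
Definition continuous_field (R : realType) (n : nat) (I : finType)
  (T : tfield R n I) : Prop :=
  forall (V : 'I_n -> I -> R) (mu : I -> R), Mpos mu ->
    forall e : R, 0 < e -> exists2 d : R, 0 < d &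
      forall nu : I -> R, Mpos nu -> (forall i, `|nu i - mu i| < d) ->
        `|T nu V - T mu V| < e.

Definition is_tensor_field (R : realType) (n : nat) (I : finType)
  (T : tfield R n I) : Prop :=
  (forall mu, Mpos mu -> multilinear_at T mu) /\ continuous_field T.

(* Markov kernels K : I -> P(I') given by stochastic matrices K i i' *)
Definition markov_kernel (R : realType) (I I' : finType) (K : I -> I' -> R)
  : Prop :=
  (forall i i', 0 <= K i i') /\ (forall i, \sum_(i' : I') K i i' = 1).

Definition congruent_kernel (R : realType) (I I' : finType) (K : I -> I' -> R)
  : Prop :=
  exists kappa : I' -> I, forall i i', kappa i' != i -> K i i' = 0.

Definition push (R : realType) (I I' : finType) (K : I -> I' -> R)
  (x : I -> R) : I' -> R :=
  fun i' => \sum_(i : I) K i i' * x i.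

Definition tfamily (R : realType) (n : nat) : Type :=
  forall I : finType, tfield R n I.

Definition congruent_family (R : realType) (n : nat) (Th : tfamily R n)
  : Prop :=
  forall (I I' : finType) (K : I -> I' -> R),
    markov_kernel K -> congruent_kernel K ->
    (forall mu : I -> R, Mpos mu -> Mpos (push K mu)) ->
    forall (mu : I -> R), Mpos mu -> forall V : 'I_n -> I -> R,
      Th I' (push K mu) (fun k => push K (V k)) = Th I mu V.

(* Main.v *)
Require Import Defs.
From HB Require Import structures.
From mathcomp Require Import all_boot all_order all_algebra.
From mathcomp Require Import reals.
From Stdlib Require Import FunctionalExtensionality.
From mathcomp Require Import lra.
Import Order.TTheory GRing.Theory Num.Theory.
Local Open Scope ring_scope.

Section Aux.
Variables (R : realType) (n : nat) (Th : tfamily R n).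
Hypothesis Hcong : congruent_family Th.
Hypothesis Hzero : forall (I : finType) (lam : R), 0 < lam ->
     forall V : 'I_n -> I -> R, Th I (fun i => lam * @cI R I i) V = 0.

Lemma rat_zero (I : finType) (c : R) (k : I -> nat) :
  0 < c -> (forall i, (0 < k i)%N) ->
  forall V, Th I (fun i => c * (k i)%:R) V = 0.
Proof.
move=> c0 k0 V.
pose I' : finType := {i : I & 'I_(k i)}.
pose K := fun (i : I) (p : I') => if tag p == i then ((k i)%:R)^-1 else 0 : R.
have kne : forall i, (k i)%:R != 0 :> R by move=> i; rewrite pnatr_eq0 -lt0n k0.
have pushE : forall (x : I -> R) (p : I'), push K x p = ((k (tag p))%:R)^-1 * x (tag p).
  move=> x p; rewrite /push (bigD1 (tag p)) //= big1 ?addr0 /K ?eqxx //.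
  by move=> i /negbTE; rewrite eq_sym => ->; rewrite mul0r.
have mk : markov_kernel K.
  split.
    by move=> i p; rewrite /K; case: ifP => // _; rewrite invr_ge0 ler0n.
  move=> i.
  rewrite -(sig_big_dep xpredT (fun _ => xpredT) (fun i0 (j : 'I_(k i0)) => K i (Tagged _ j))) /=.
  rewrite (bigD1 i) //= /K /= eqxx sumr_const card_ord -[_ *+ _]mulr_natl mulfV //.
  rewrite big1 ?addr0 // => i0 /negbTE H; apply: big1 => j _; by rewrite H.
have ck : congruent_kernel K.
  by exists (fun p => tag p) => i p /negbTE H; rewrite /K H.
have pos : forall mu : I -> R, Mpos mu -> Mpos (push K mu).
  move=> mu Hmu p; rewrite pushE mulr_gt0 // invr_gt0 ltr0n; exact: k0.
have muP : Mpos (fun i => c * (k i)%:R).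
  by move=> i; rewrite mulr_gt0 // ltr0n.
rewrite -(@Hcong _ _ _ mk ck pos _ muP V).
have -> : push K (fun i => c * (k i)%:R) = (fun p => c).
  apply: functional_extensionality => p; rewrite pushE mulrCA mulVf ?mulr1 //.
case: (posnP #|I'|) => [c0'|cp].
  have -> : (fun p : I' => c) = (fun p => 1 * @cI R I' p).
    apply: functional_extensionality => p.
    by move: c0'; move/card0_eq => /(_ p); rewrite inE.
  by apply: Hzero.
have -> : (fun p : I' => c) = (fun p => (c * #|I'|%:R) * @cI R I' p).
  apply: functional_extensionality => p.
  by rewrite /cI -mulrA mulfV ?mulr1 // pnatr_eq0 -lt0n.
by apply: Hzero; rewrite mulr_gt0 // ltr0n.
Qed.
End Aux.

Theorem lemma4p8 (R : realType) (n : nat) (Th : tfamily R n)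
  (Hfield : forall I : finType, is_tensor_field (Th I))
  (Hcong : congruent_family Th)
  (Hzero : forall (I : finType) (lam : R), 0 < lam ->
     forall V : 'I_n -> I -> R, Th I (fun i => lam * @cI R I i) V = 0) :
  forall (I : finType) (mu : I -> R), Mpos mu ->
    forall V : 'I_n -> I -> R, Th I mu V = 0.
Proof.
move=> I mu Hmu V.
apply/eqP; apply/negPn/negP => Hne.
have e0 : 0 < `|Th I mu V| by rewrite normr_gt0.
have [_ Hc] := Hfield I.
have [d d0 Hd] := Hc V mu Hmu _ e0.
pose c := d / 2.
have c0 : 0 < c by rewrite divr_gt0.
pose k := fun i => (Num.truncn (mu i / c)).+1.
have Hk : forall i, (0 < k i)%N by [].
have nuP : Mpos (fun i => c * (k i)%:R).
  by move=> i; rewrite mulr_gt0 // ltr0n.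
suff : `|Th I (fun i => c * (k i)%:R) V - Th I mu V| < `|Th I mu V|.
  by rewrite (@rat_zero _ _ _ Hcong Hzero _ _ _ c0 Hk V) sub0r normrN ltxx.
apply: Hd => // i.
have h1 : mu i / c < (k i)%:R := truncnS_gt _.
have h2 : ((k i).-1)%:R <= mu i / c.
  by rewrite /k /= truncn_le divr_ge0 // ?ltW.
have h3 : (k i)%:R = ((k i).-1)%:R + 1 :> R by rewrite /k /= -natr1.
have hm : 0 < mu i := Hmu i.
rewrite ltr_pdivrMr // in h1.
rewrite ler_pdivlMr // in h2.
rewrite ger0_norm; last by rewrite subr_ge0 mulrC ltW.
rewrite h3 mulrDr mulr1 in h1 *.
rewrite mulrDl mul1r [_ * c]mulrC in h1.
rewrite [_ * c]mulrC in h2.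
have hcd : c * 2 = d by rewrite /c divfK // pnatr_eq0.
move: h1 h2 hcd; clearbody c; lra.
Qed.
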